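(* For every LTL formula $\varphi$ (in negation normal form) and every $\star\in\{a,s\}$: (i) $\emptyset\models_\star\varphi$ (empty team property); (ii) if $T\models_\star\varphi$ and $T'\subseteq T$ then $T'\models_\star\varphi$ (downward closure); (iii) for every trace $t$, $\{t\}\models_\star\varphi$ iff $t\models\varphi$ in classical LTL semantics (singleton equivalence). Moreover, for the asynchronous semantics: (iv) if $T\models_a\varphi$ and $T'\models_a\varphi$ then $T\cup T'\models_a\varphi$ (union closure); (v) $T\models_a\varphi$ iff $\{t\}\models_a\varphi$ for all $t\in T$ (flatness); consequently $T\models_a\varphi$ iff $t\models\varphi$ for every $t\in T$. Finally, the synchronous semantics is neither union closed nor flat: for $T=\{\{p\}\emptyset^\omega\}$ and $T'=\{\emptyset\{p\}\emptyset^\omega\}$ one has $T\models_s F p$, $T'\models_s Fp$, but $T\cup T'\not\models_s Fp$.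
   Context: Fix a finite set $AP$ of atomic propositions. A trace is an infinite sequence $t=t(0)t(1)t(2)\cdots\in(2^{AP})^\omega$; for $i\ge 0$, $t[i,\infty)=t(i)t(i+1)\cdots$. A team is a (possibly empty, possibly infinite) set $T$ of traces; $T[i,\infty)=\{t[i,\infty):t\in T\}$, and for a function $k:T\to\mathbb N$, $T[k]=\{t[k(t),\infty):t\in T\}$. LTL formulas are given by $\varphi::=p\mid\neg p\mid\varphi\wedge\varphi\mid\varphi\vee\varphi\mid X\varphi\mid F\varphi\mid G\varphi\mid\varphi U\varphi\mid\varphi R\varphi$ with $p\in AP$; $t\models\varphi$ denotes the usual classical LTL semantics on a single trace. Team semantics $\models_\star$, $\star\in\{a,s\}$: $T\models_\star p$ iff $p\in t(0)$ for all $t\in T$; $T\models_\star\neg p$ iff $p\notin t(0)$ for all $t\in T$; $T\models_\star\psi\wedge\varphi$ iff $T\models_\star\psi$ and $T\models_\star\varphi$; $T\models_\star\psi\vee\varphi$ (splitjunction) iff there are $T_1,T_2$ with $T_1\cup T_2=T$, $T_1\models_\star\psi$, $T_2\models_\star\varphi$; $T\models_\star X\varphi$ iff $T[1,\infty)\models_\star\varphi$. Synchronous: $T\models_s F\varphi$ iff $\exists k\ge0$: $T[k,\infty)\models_s\varphi$; $T\models_s G\varphi$ iff $\forall k\ge0$: $T[k,\infty)\models_s\varphi$; $T\models_s\psi U\varphi$ iff $\exists k$: $T[k,\infty)\models_s\varphi$ and $\forall k'<k$: $T[k',\infty)\models_s\psi$; $T\models_s\psi R\varphi$ iff $\forall k$: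 $T[k,\infty)\models_s\varphi$ or $\exists k'<k$: $T[k',\infty)\models_s\psi$. Asynchronous (time advances independently on each trace): $T\models_a F\varphi$ iff there is $k:T\to\mathbb N$ with $T[k]\models_a\varphi$; $T\models_a G\varphi$ iff $T[k]\models_a\varphi$ for all $k:T\to\mathbb N$; $T\models_a\psi U\varphi$ iff there is $k:T\to\mathbb N$ with $T[k]\models_a\varphi$ such that, with $T_>=\{t\in T:k(t)>0\}$, for every $k':T_>\to\mathbb N$ with $k'(t)<k(t)$ for all $t\in T_>$, $\{t[k'(t),\infty):t\in T_>\}\models_a\psi$; $T\models_a\psi R\varphi$ iff for every $k:T\to\mathbb N$ there are $T_1\cup T_2=T$ with $\{t[k(t),\infty):t\in T_1\}\models_a\varphi$ and some $k':T_2\to\mathbb N$ with $k'(t)<k(t)$ for all $t\in T_2$ and $\{t[k'(t),\infty):t\in T_2\}\models_a\psi$. *)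

(* Defs.v *)
From mathcomp Require Import all_boot.
Set Implicit Arguments. Unset Strict Implicit. Unset Printing Implicit Defensive.

Section LTL.
Variable AP : finType.

Definition trace := nat -> {set AP}.
Definition suffix (i : nat) (t : trace) : trace := fun n => t (i + n).

Definition team := trace -> Prop.

Inductive formula : Type :=
| FAtom : AP -> formula
| FNAtom : AP -> formula
| FAnd : formula -> formula -> formula
| FOr : formula -> formula -> formula
| FX : formula -> formula
| FF : formula -> formula
| FG : formula -> formula
| FU : formula -> formula -> formula
| FR : formula -> formula -> formula.

Fixpoint lsat (t : trace) (phi : formula) {struct phi} : Prop :=
  match phi with
  | FAtom p => p \in t 0
  | FNAtom p => p \notin t 0
  | FAnd a b => lsat t a /\ lsat t b
  | FOr a b => lsat t a \/ lsat t b
  | FX a => lsat (suffix 1 t) a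
  | FF a => exists k, lsat (suffix k t) a
  | FG a => forall k, lsat (suffix k t) a
  | FU a b => exists k, lsat (suffix k t) b /\ forall k', k' < k -> lsat (suffix k' t) a
  | FR a b => forall k, lsat (suffix k t) b \/ exists k', k' < k /\ lsat (suffix k' t) a
  end.

Definition tshift (i : nat) (T : team) : team :=
  fun u => exists t, T t /\ u = suffix i t.
(* T[k] for k : T -> N (values of k outside T are irrelevant) *)
Definition tshiftk (k : trace -> nat) (T : team) : team :=
  fun u => exists t, T t /\ u = suffix (k t) t.

Definition tunion (T1 T2 : team) : team := fun t => T1 t \/ T2 t.
Definition tsubset (T1 T2 : team) : Prop := forall t, T1 t -> T2 t.
Definition teq (T1 T2 : team) : Prop := forall t, T1 t <-> T2 t.
Definition tempty : team := fun _ => False.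
Definition tsingle (t : trace) : team := fun u => u = t.

Inductive mode := Async | Sync.

Fixpoint tsat (m : mode) (T : team) (phi : formula) {struct phi} : Prop :=
  match phi with
  | FAtom p => forall t, T t -> p \in t 0
  | FNAtom p => forall t, T t -> p \notin t 0
  | FAnd a b => tsat m T a /\ tsat m T b
  | FOr a b => exists T1 T2, teq (tunion T1 T2) T /\ tsat m T1 a /\ tsat m T2 b
  | FX a => tsat m (tshift 1 T) a
  | FF a =>
      match m with
      | Sync => exists k, tsat m (tshift k T) a
      | Async => exists k : trace -> nat, tsat m (tshiftk k T) a
      end
  | FG a =>
      match m with
      | Sync => forall k, tsat m (tshift k T) a
      | Async => forall k : trace -> nat, tsat m (tshiftk k T) a
      end
  | FU a b =>
      match m with
      | Sync => exists k, tsat m (tshift k T) b /\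
                  forall k', k' < k -> tsat m (tshift k' T) a
      | Async => exists k : trace -> nat, tsat m (tshiftk k T) b /\
                  let Tgt := fun t => T t /\ 0 < k t in
                  forall k' : trace -> nat, (forall t, Tgt t -> k' t < k t) ->
                    tsat m (tshiftk k' Tgt) a
      end
  | FR a b =>
      match m with
      | Sync => forall k, tsat m (tshift k T) b \/
                  exists k', k' < k /\ tsat m (tshift k' T) a
      | Async => forall k : trace -> nat, exists T1 T2,
                  teq (tunion T1 T2) T /\ tsat m (tshiftk k T1) b /\
                  exists k' : trace -> nat, (forall t, T2 t -> k' t < k t) /\
                    tsat m (tshiftk k' T2) a
      end
  end.

Definition trace_at (p : AP) (i : nat) : trace :=
  fun n => if n == i then [set p] else set0.

End LTL.

(* Main.v *)
From Stdlib Require Import Setoid Classical ClassicalEpsilon.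
Require Import Defs.
From mathcomp Require Import all_boot.
From mathcomp Require Import zify.

Lemma choice_fun (A : Type) (P : A -> nat -> Prop) :
  (forall a, exists n, P a n) -> exists f : A -> nat, forall a, P a (f a).
Proof.
move=> H.
exists (fun a => proj1_sig (constructive_indefinite_description _ (H a))).
move=> a; exact: proj2_sig.
Qed.

Lemma choice_on (A : Type) (T : A -> Prop) (P : A -> nat -> Prop) :
  (forall a, T a -> exists n, P a n) -> exists f : A -> nat, forall a, T a -> P a (f a).
Proof.
move=> H; apply: (@choice_fun A (fun a n => T a -> P a n)) => a.
case: (classic (T a)) => Ha.
  by case: (H a Ha) => n Hn; exists n.
by exists 0.
Qed.
Arguments choice_on {A T P}.

Lemma async_flat (AP : finType) (phi : formula AP) :
  forall T, tsat Async T phi <-> (forall t, T t -> lsat t phi).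
Proof.
induction phi as [p|p|a IHa b IHb|a IHa b IHb|a IH|a IH|a IH|a IHa b IHb|a IHa b IHb];
  intros T; simpl.
- split; auto.
- split; auto.
- rewrite IHa IHb; firstorder.
- split.
  + intros [T1 [T2 [Heq [H1 H2]]]] t Ht.
    rewrite IHa in H1; rewrite IHb in H2.
    destruct (proj2 (Heq t) Ht) as [H|H]; [left|right]; auto.
  + intros H.
    exists (fun t => T t /\ lsat t a), (fun t => T t /\ lsat t b).
    split; [|split].
    * intro t; unfold tunion; split; [firstorder|].
      intro Ht; destruct (H t Ht); auto.
    * rewrite IHa; intros t []; auto.
    * rewrite IHb; intros t []; auto.
- rewrite IH; split.
  + intros H t Ht; apply H; exists t; auto.
  + intros H u [t [Ht ->]]; auto.
- split.
  + intros [k Hk] t Ht; rewrite IH in Hk; exists (k t); apply Hk; exists t; auto.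
  + intros H. destruct (choice_on H) as [f Hf].
    exists f; rewrite IH; intros u [t [Ht ->]]; auto.
- split.
  + intros H t Ht n; specialize (H (fun _ => n)); rewrite IH in H; apply H; exists t; auto.
  + intros H k; rewrite IH; intros u [t [Ht ->]]; auto.
- split.
  + intros [k [Hb Ha]] t Ht; rewrite IHb in Hb; exists (k t); split.
    * apply Hb; exists t; auto.
    * intros j Hj.
      specialize (Ha (fun s => minn j (k s).-1)).
      cbv zeta in Ha.
      have Ha' := Ha (fun s Hs => ltac:(move: Hs => [_ Hs]; lia)).
      rewrite IHa in Ha'.
      have E : minn j (k t).-1 = j by lia.
      rewrite -E; apply Ha'; exists t; split; auto; split; auto; lia.
  + intros H. destruct (choice_on H) as [f Hf].
    exists f; split.
    * rewrite IHb; intros u [t [Ht ->]]; apply Hf; auto.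
    * cbv zeta; intros k' Hk'; rewrite IHa; intros u [t [[Ht Hpos] ->]].
      apply (proj2 (Hf t Ht)); apply Hk'; split; auto.
- split.
  + intros H t Ht n.
    destruct (H (fun _ => n)) as [T1 [T2 [Heq [H1 [k' [Hk' H2]]]]]].
    rewrite IHb in H1; rewrite IHa in H2.
    destruct (proj2 (Heq t) Ht) as [Ht'|Ht'].
    * left; apply H1; exists t; auto.
    * right; exists (k' t); split; [apply Hk'; auto | apply H2; exists t; auto].
  + intros H k.
    exists (fun t => T t /\ lsat (Defs.suffix (k t) t) b),
           (fun t => T t /\ ~ lsat (Defs.suffix (k t) t) b).
    split; [|split].
    * intro t; unfold tunion; split; [firstorder|].
      intro Ht; destruct (classic (lsat (Defs.suffix (k t) t) b)); auto.
    * rewrite IHb; intros u [t [[Ht Hb] ->]]; auto.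
    * have Hc : forall t, (T t /\ ~ lsat (Defs.suffix (k t) t) b) ->
                  exists j, j < k t /\ lsat (Defs.suffix j t) a.
        intros t [Ht Hnb]; destruct (H t Ht (k t)) as [Hb|Hx]; [contradiction|auto].
      destruct (choice_on Hc) as [f Hf].
      exists f; split.
      -- intros t Ht; apply Hf; auto.
      -- rewrite IHa; intros u [t [Ht ->]]; apply Hf; auto.
Qed.

Lemma tshift_sub (AP : finType) k (T T' : team AP) :
  tsubset T' T -> tsubset (tshift k T') (tshift k T).
Proof. intros H u [t [Ht ->]]; exists t; auto. Qed.

Lemma sync_mono (AP : finType) (phi : formula AP) :
  forall T T', tsat Sync T phi -> tsubset T' T -> tsat Sync T' phi.
Proof.
induction phi as [p|p|a IHa b IHb|a IHa b IHb|a IH|a IH|a IH|a IHa b IHb|a IHa b IHb];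
  intros T T' H Hsub; simpl in *.
- auto.
- auto.
- destruct H; split; eauto.
- destruct H as [T1 [T2 [Heq [H1 H2]]]].
  exists (fun t => T1 t /\ T' t), (fun t => T2 t /\ T' t).
  split; [|split].
  + intro t; unfold tunion; split; [intros [[]|[]]; auto|].
    intro Ht; destruct (proj2 (Heq t) (Hsub t Ht)); auto.
  + apply IHa with T1; auto; intros t []; auto.
  + apply IHb with T2; auto; intros t []; auto.
- eapply IH; eauto using tshift_sub.
- destruct H as [k Hk]; exists k; eauto using tshift_sub.
- intros k; eauto using tshift_sub.
- destruct H as [k [Hb Ha]]; exists k; split; eauto using tshift_sub.
- intros k; destruct (H k) as [H1 | [k' [Hk' H2]]];
    [left | right; exists k'; split]; eauto using tshift_sub.
Qed.

Lemma sync_empty (AP : finType) (phi : formula AP) : tsat Sync (@tempty AP) phi.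
Proof.
have Hs : forall k, tsubset (tshift k (@tempty AP)) (@tempty AP).
  intros k u [t [[] _]].
induction phi; simpl.
- intros t [].
- intros t [].
- split; auto.
- exists (@tempty AP), (@tempty AP); split; [|split]; auto.
  intro t; unfold tunion, tempty; tauto.
- eauto using sync_mono.
- exists 0; eauto using sync_mono.
- intros k; eauto using sync_mono.
- exists 0; split; [eauto using sync_mono| intros k' Hk'; lia].
- intros k; left; eauto using sync_mono.
Qed.

Lemma sync_sh (AP : finType) k t (phi : formula AP) :
  tsat Sync (tshift k (tsingle t)) phi <-> tsat Sync (tsingle (Defs.suffix k t)) phi.
Proof.
split; intro H; eapply sync_mono; eauto.
- intros u ->; exists t; split; auto; reflexivity.
- intros u [s [Hs ->]]; rewrite Hs; reflexivity.
Qed.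

Lemma sync_single (AP : finType) (phi : formula AP) :
  forall t, tsat Sync (tsingle t) phi <-> lsat t phi.
Proof.
induction phi as [p|p|a IHa b IHb|a IHa b IHb|a IH|a IH|a IH|a IHa b IHb|a IHa b IHb];
  intros t; simpl.
- split; [intro H; apply H; reflexivity | intros H u ->; auto].
- split; [intro H; apply H; reflexivity | intros H u ->; auto].
- rewrite IHa IHb; tauto.
- split.
  + intros [T1 [T2 [Heq [H1 H2]]]].
    destruct (proj2 (Heq t) (erefl t)) as [Ht|Ht].
    * left; apply IHa; eapply sync_mono; eauto; intros u ->; auto.
    * right; apply IHb; eapply sync_mono; eauto; intros u ->; auto.
  + intros [Ha|Hb].
    * exists (tsingle t), (@tempty AP); split; [|split].
      -- intro u; unfold tunion, tempty; tauto.
      -- apply IHa; auto.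
      -- apply sync_empty.
    * exists (@tempty AP), (tsingle t); split; [|split].
      -- intro u; unfold tunion, tempty; tauto.
      -- apply sync_empty.
      -- apply IHb; auto.
- rewrite sync_sh; auto.
- setoid_rewrite sync_sh; setoid_rewrite IH; tauto.
- setoid_rewrite sync_sh; setoid_rewrite IH; tauto.
- setoid_rewrite sync_sh; setoid_rewrite IHa; setoid_rewrite IHb; tauto.
- setoid_rewrite sync_sh; setoid_rewrite IHa; setoid_rewrite IHb; tauto.
Qed.

Lemma async_single (AP : finType) (phi : formula AP) t :
  tsat Async (tsingle t) phi <-> lsat t phi.
Proof.
rewrite async_flat; split; [intro H; apply H; reflexivity | intros H u ->; auto].
Qed.

Theorem mainTheorem1 :
  (forall (AP : finType) (phi : formula AP) (m : mode),
      tsat m (@tempty AP) phi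
   /\ (forall T T' : team AP, tsat m T phi -> tsubset T' T -> tsat m T' phi)
   /\ (forall t : trace AP, tsat m (tsingle t) phi <-> lsat t phi))
  /\ (forall (AP : finType) (phi : formula AP),
      (forall T T' : team AP, tsat Async T phi -> tsat Async T' phi ->
                              tsat Async (tunion T T') phi)
   /\ (forall T : team AP,
        tsat Async T phi <-> (forall t, T t -> tsat Async (tsingle t) phi))
   /\ (forall T : team AP,
        tsat Async T phi <-> (forall t, T t -> lsat t phi)))
  /\ (forall (AP : finType) (p : AP),
      let T := tsingle (trace_at p 0) in
      let T' := tsingle (trace_at p 1) in
      tsat Sync T (FF (FAtom p)) /\ tsat Sync T' (FF (FAtom p)) /\
      ~ tsat Sync (tunion T T') (FF (FAtom p))).
Proof.
split; [|split].
- intros AP phi [|].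
  + split; [|split].
    * rewrite async_flat; intros t [].
    * intros T T' H Hs; rewrite async_flat in H; apply async_flat; intros t Ht; apply H, Hs, Ht.
    * apply async_single.
  + split; [|split].
    * apply sync_empty.
    * apply sync_mono.
    * apply sync_single.
- intros AP phi; split; [|split].
  + intros T T'; rewrite !async_flat; intros H1 H2 t [Ht|Ht]; auto.
  + intros T; rewrite async_flat; setoid_rewrite async_single; tauto.
  + apply async_flat.
- intros AP p T T'; simpl; split; [|split].
  + exists 0; intros u [t [Ht ->]]; rewrite Ht /Defs.suffix /trace_at /=.
    by rewrite set11.
  + exists 1; intros u [t [Ht ->]]; rewrite Ht /Defs.suffix /trace_at /=.
    by rewrite set11.
  + intros [k Hk].
    have H0 := Hk _ (ex_intro _ (trace_at p 0) (conj (or_introl (erefl _)) (erefl _))).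
    have H1 := Hk _ (ex_intro _ (trace_at p 1) (conj (or_intror (erefl _)) (erefl _))).
    move: H0 H1; rewrite /Defs.suffix /trace_at addn0.
    case: (k =P 0) => [->|] //=; first by move=> _; rewrite inE.
    by move=> _; rewrite inE.
Qed.
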